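(* Let $\beta\in[0,1)$, let $S:\mathbb R^n\to\mathbb R^n$ be a $\beta$-contraction and $T:\mathbb R^n\to\mathbb R^n$ a nonexpansive mapping with $\operatorname{Fix}(T)\ne\emptyset$. Let $\alpha_k=\min\{2/(k(1-\beta)),1\}$ for $k\ge1$, and let $\mathbf x^0\in\mathbb R^n$ and, for $k\ge1$, $\mathbf y^k=T(\mathbf x^{k-1})$, $\mathbf z^k=S(\mathbf x^{k-1})$, $\mathbf x^k=\alpha_k\mathbf z^k+(1-\alpha_k)\mathbf y^k$. Then for any $\tilde{\mathbf x}\in\operatorname{Fix}(T)$ and all $k\ge1$, $$\|\mathbf x^k-\mathbf x^{k-1}\|\le\frac{2C_{\tilde{\mathbf x}}J}{(1-\beta)k},\qquad \|\mathbf y^k-\mathbf x^{k-1}\|\le\frac{2C_{\tilde{\mathbf x}}(J+2)}{(1-\beta)k},$$ where $J=\lfloor 2/(1-\beta)\rfloor$ and $C_{\tilde{\mathbf x}}=\max\{\|\mathbf x^0-\tilde{\mathbf x}\|,\ \frac{1}{1-\beta}\|\tilde{\mathbf x}-S(\tilde{\mathbf x})\|\}$. In particular both sequences tend to $0$.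
   Context: A mapping $S$ is a $\beta$-contraction if $\|S(\mathbf x)-S(\mathbf y)\|\le\beta\|\mathbf x-\mathbf y\|$ for all $\mathbf x,\mathbf y$; $T$ is nonexpansive if this holds with constant $1$. $\operatorname{Fix}(T)=\{\mathbf x:T(\mathbf x)=\mathbf x\}$. *)

(* Defs.v *)
From mathcomp Require Import all_boot.
From Stdlib Require Import Reals.
Open Scope R_scope.

Definition vec (n : nat) := 'I_n -> R.

Definition vnorm {n : nat} (x : vec n) : R :=
  sqrt (\big[Rplus/0]_(i < n) (x i * x i)).

Definition vsub {n : nat} (x y : vec n) : vec n := fun i => x i - y i.

Definition vcomb {n : nat} (a : R) (x : vec n) (b : R) (y : vec n) : vec n :=
  fun i => a * x i + b * y i.

Definition is_contraction {n : nat} (beta : R) (S : vec n -> vec n) : Prop :=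
  forall x y, vnorm (vsub (S x) (S y)) <= beta * vnorm (vsub x y).

Definition nonexpansive {n : nat} (T : vec n -> vec n) : Prop :=
  is_contraction 1 T.

Definition Fix {n : nat} (T : vec n -> vec n) (x : vec n) : Prop := T x = x.

Definition alpha (beta : R) (k : nat) : R := Rmin (2 / (INR k * (1 - beta))) 1.

Fixpoint iter_x {n : nat} (beta : R) (S T : vec n -> vec n) (x0 : vec n) (k : nat)
  : vec n :=
  match k with
  | O => x0
  | Datatypes.S k' =>
      let xp := iter_x beta S T x0 k' in
      vcomb (alpha beta k) (S xp) (1 - alpha beta k) (T xp)
  end.

(* J = floor (2/(1-beta)) ; Int_part is the floor function on R *)
Definition Jconst (beta : R) : R := IZR (Int_part (2 / (1 - beta))).

Definition Cconst {n : nat} (beta : R) (S : vec n -> vec n) (x0 xt : vec n) : R :=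
  Rmax (vnorm (vsub x0 xt)) (/ (1 - beta) * vnorm (vsub xt (S xt))).

(* Main.v *)
Require Import Defs.
From mathcomp Require Import all_boot.
From Stdlib Require Import Reals Lra Psatz ZArith FunctionalExtensionality.
Open Scope R_scope.

Lemma sumR_ge0 n (r : seq 'I_n) (F : 'I_n -> R) :
  (forall i, 0 <= F i) -> 0 <= \big[Rplus/0]_(i <- r) F i.
Proof.
move=> H; elim: r => [|a r IH]; first by rewrite big_nil; lra.
rewrite big_cons; move: (H a); lra.
Qed.

Lemma sumR_scale n (r : seq 'I_n) a (F : 'I_n -> R) :
  \big[Rplus/0]_(i <- r) (a * F i) = a * \big[Rplus/0]_(i <- r) F i.
Proof.
elim: r => [|x r IH]; first by rewrite !big_nil; ring.
by rewrite !big_cons IH; ring.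
Qed.

Lemma sumR_sq n (r : seq 'I_n) (x y : 'I_n -> R) :
  \big[Rplus/0]_(i <- r) ((x i + y i) * (x i + y i)) =
  \big[Rplus/0]_(i <- r) (x i * x i) + 2 * \big[Rplus/0]_(i <- r) (x i * y i)
  + \big[Rplus/0]_(i <- r) (y i * y i).
Proof.
elim: r => [|a r IH]; first by rewrite !big_nil; ring.
by rewrite !big_cons IH; ring.
Qed.

Lemma sumR_CS n (r : seq 'I_n) (x y : 'I_n -> R) :
  (\big[Rplus/0]_(i <- r) (x i * y i)) * (\big[Rplus/0]_(i <- r) (x i * y i)) <=
  (\big[Rplus/0]_(i <- r) (x i * x i)) * (\big[Rplus/0]_(i <- r) (y i * y i)).
Proof.
elim: r => [|a r IH]; first by rewrite !big_nil; lra.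
rewrite !big_cons.
have hA : 0 <= \big[Rplus/0]_(i <- r) (x i * x i)
  by apply: sumR_ge0 => i; nra.
have hB : 0 <= \big[Rplus/0]_(i <- r) (y i * y i)
  by apply: sumR_ge0 => i; nra.
move: IH hA hB.
set A := \big[Rplus/0]_(i <- r) (x i * x i).
set B := \big[Rplus/0]_(i <- r) (y i * y i).
set D := \big[Rplus/0]_(i <- r) (x i * y i).
set u := x a; set v := y a.
clearbody A B D u v.
move=> IH hA hB.
suff: 2 * u * v * D <= u * u * B + v * v * A by nra.
case: (Rle_lt_or_eq_dec 0 A hA) => hA0; last first.
  rewrite -hA0 in IH.
  have hD : D = 0 by nra.
  rewrite hD; nra.
have hid : A * (u * u * B + v * v * A - 2 * u * v * D) =
  (A * v - u * D) * (A * v - u * D) + u * u * (A * B - D * D) by ring.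
have h1 : 0 <= (A * v - u * D) * (A * v - u * D) + u * u * (A * B - D * D).
  apply: Rplus_le_le_0_compat; first exact: Rle_0_sqr.
  apply: Rmult_le_pos; nra.
rewrite -hid in h1.
nra.
Qed.

Lemma vnorm_ge0 n (x : vec n) : 0 <= vnorm x.
Proof. exact: sqrt_pos. Qed.

Lemma vnorm_ext n (f g : vec n) : (forall i, f i = g i) -> vnorm f = vnorm g.
Proof. by move=> H; rewrite (functional_extensionality f g H). Qed.

Lemma vnorm_add n (f g : vec n) :
  vnorm (fun i => f i + g i) <= vnorm f + vnorm g.
Proof.
rewrite /vnorm sumR_sq.
have hCS := @sumR_CS n (index_enum 'I_n) f g.
have hA : 0 <= \big[Rplus/0]_(i < n) (f i * f i) by apply: sumR_ge0 => i; nra.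
have hB : 0 <= \big[Rplus/0]_(i < n) (g i * g i) by apply: sumR_ge0 => i; nra.
move: hCS hA hB.
set A := \big[Rplus/0]_(i < n) (f i * f i).
set B := \big[Rplus/0]_(i < n) (g i * g i).
set D := \big[Rplus/0]_(i < n) (f i * g i).
clearbody A B D.
move=> hCS hA hB.
have sA := sqrt_sqrt A hA; have sB := sqrt_sqrt B hB.
have pA := sqrt_pos A; have pB := sqrt_pos B.
have hD : D <= sqrt A * sqrt B.
  have : D * D <= (sqrt A * sqrt B) * (sqrt A * sqrt B).
    have -> : (sqrt A * sqrt B) * (sqrt A * sqrt B) = (sqrt A * sqrt A) * (sqrt B * sqrt B) by ring.
    by rewrite sA sB.
  have ps : 0 <= sqrt A * sqrt B by apply: Rmult_le_pos.
  move: ps; generalize (sqrt A * sqrt B) => s ps hDs.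
  case: (Rle_or_lt D s) => // hlt; exfalso.
  have : s * s < D * D by apply: Rmult_le_0_lt_compat.
  lra.
rewrite -(sqrt_square (sqrt A + sqrt B)); last lra.
apply: sqrt_le_1_alt.
have -> : (sqrt A + sqrt B) * (sqrt A + sqrt B) = sqrt A * sqrt A + sqrt B * sqrt B + 2 * (sqrt A * sqrt B) by ring.
rewrite sA sB; lra.
Qed.

Lemma vnorm_scale n a (f : vec n) : vnorm (fun i => a * f i) = Rabs a * vnorm f.
Proof.
rewrite /vnorm.
have -> : \big[Rplus/0]_(i < n) (a * f i * (a * f i)) = (a * a) * \big[Rplus/0]_(i < n) (f i * f i).
  rewrite -sumR_scale; apply: eq_bigr => i _; ring.
rewrite sqrt_mult_alt; last nra.
by rewrite -sqrt_Rsqr_abs.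
Qed.

Lemma vnorm_comb2 n a b (u v : vec n) :
  vnorm (fun i => a * u i + b * v i) <= Rabs a * vnorm u + Rabs b * vnorm v.
Proof.
apply: Rle_trans (vnorm_add _ (fun i => a * u i) (fun i => b * v i)) _.
by rewrite !vnorm_scale; lra.
Qed.

Lemma vnorm_comb3 n a b e (u v w : vec n) :
  vnorm (fun i => a * u i + b * v i + e * w i) <=
  Rabs a * vnorm u + Rabs b * vnorm v + Rabs e * vnorm w.
Proof.
apply: Rle_trans (vnorm_add _ (fun i => a * u i + b * v i) (fun i => e * w i)) _.
rewrite vnorm_scale; have := @vnorm_comb2 n a b u v; lra.
Qed.

Lemma vdist_tri n (x y z : vec n) :
  vnorm (vsub x z) <= vnorm (vsub x y) + vnorm (vsub y z).
Proof.
rewrite (@vnorm_ext n _ (fun i => vsub x y i + vsub y z i)); first exact: vnorm_add.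
by move=> i; rewrite /vsub; ring.
Qed.

Lemma vdist_sym n (x y : vec n) : vnorm (vsub x y) = vnorm (vsub y x).
Proof.
rewrite (@vnorm_ext n _ (fun i => (-1) * vsub y x i)); last by move=> i; rewrite /vsub; ring.
rewrite vnorm_scale Rabs_Ropp Rabs_R1; ring.
Qed.

Lemma int_dich (J : R) (z : Z) (k : nat) : J = IZR z ->
  INR k <= J \/ J + 1 <= INR k.
Proof.
move=> hJ; rewrite hJ INR_IZR_INZ.
case: (Z_le_gt_dec (Z.of_nat k) z) => h.
  by left; apply: IZR_le.
right; rewrite -plus_IZR; apply: IZR_le; lia.
Qed.

Lemma J_spec beta : 0 <= beta -> beta < 1 ->
  (1 - beta) * Jconst beta <= 2 /\ 2 < (1 - beta) * (Jconst beta + 1) /\ 2 <= Jconst beta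
  /\ exists z, Jconst beta = IZR z.
Proof.
move=> h0 h1.
have hc : 0 < 1 - beta by lra.
have [hb1 hb2] := base_Int_part (2 / (1 - beta)).
rewrite /Jconst.
have e2 : (1 - beta) * (2 / (1 - beta)) = 2 by field; lra.
have g2 : 2 <= 2 / (1 - beta).
  have -> : 2 / (1 - beta) = 2 + 2 * beta / (1 - beta) by field; lra.
  have : 0 <= 2 * beta / (1 - beta) by apply: Rle_mult_inv_pos; lra.
  lra.
split.
  move: e2 g2 hb1 hb2.
  generalize (IZR (Int_part (2 / (1 - beta)))) (2 / (1 - beta)) => u w e2 g2 hb1 hb2.
  by rewrite -e2; apply: Rmult_le_compat_l; lra.
split.
  move: e2 g2 hb1 hb2.
  generalize (IZR (Int_part (2 / (1 - beta)))) (2 / (1 - beta)) => u w e2 g2 hb1 hb2.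
  by rewrite -e2; apply: Rmult_lt_compat_l; lra.
split.
  have : 1 < IZR (Int_part (2 / (1 - beta))).
    move: hb2 g2; generalize (IZR (Int_part (2 / (1 - beta)))) (2 / (1 - beta)) => u w; lra.
  move/lt_IZR => hz.
  apply: IZR_le; lia.
by eexists.
Qed.

Lemma alpha_bounds beta k : 0 <= beta -> beta < 1 -> (1 <= k)%nat ->
  0 <= alpha beta k <= 1 /\ alpha beta k <= 2 / (INR k * (1 - beta)).
Proof.
move=> h0 h1 hk.
have hK : 1 <= INR k by apply: (le_INR 1); apply/leP.
have hp : 0 < INR k * (1 - beta) by apply: Rmult_lt_0_compat; lra.
rewrite /alpha; split; last exact: Rmin_l.
split; last exact: Rmin_r.
apply: Rmin_glb; last lra.
apply: Rle_mult_inv_pos; lra.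
Qed.

Lemma alpha_one beta k : 0 <= beta -> beta < 1 -> (1 <= k)%nat ->
  (1 - beta) * INR k <= 2 -> alpha beta k = 1.
Proof.
move=> h0 h1 hk h2.
have hK : 1 <= INR k by apply: (le_INR 1); apply/leP.
have hp : 0 < INR k * (1 - beta) by apply: Rmult_lt_0_compat; lra.
rewrite /alpha; apply: Rmin_right.
have -> : 2 / (INR k * (1 - beta)) = 1 + (2 - (1 - beta) * INR k) / (INR k * (1 - beta))
  by field; lra.
have : 0 <= (2 - (1 - beta) * INR k) / (INR k * (1 - beta)) by apply: Rle_mult_inv_pos; lra.
lra.
Qed.

Lemma alpha_form beta k : 0 <= beta -> beta < 1 -> (1 <= k)%nat ->
  2 < (1 - beta) * INR k -> alpha beta k = 2 / ((1 - beta) * INR k).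
Proof.
move=> h0 h1 hk h2.
have hK : 1 <= INR k by apply: (le_INR 1); apply/leP.
have hp : 0 < INR k * (1 - beta) by apply: Rmult_lt_0_compat; lra.
rewrite /alpha Rmin_left; first by rewrite Rmult_comm.
have -> : 2 / (INR k * (1 - beta)) = 1 - ((1 - beta) * INR k - 2) / (INR k * (1 - beta))
  by field; lra.
have : 0 <= ((1 - beta) * INR k - 2) / (INR k * (1 - beta)) by apply: Rle_mult_inv_pos; lra.
lra.
Qed.

Lemma alg1 (c C J k D a : R) : 0 < c -> 0 <= C -> 2 <= J -> c * J <= 2 ->
  3 <= k -> k <= J + 1 -> 2 < c * k -> a = 2 / (c * k) -> 0 <= D -> D <= 2 * C ->
  (1 - a * c) * D + Rabs (a - 1) * (2 * C) <= 2 * C * J / (c * k).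
Proof.
move=> hc hC hJ hcJ hk hkJ hck2 ha hD0 hD.
have hck : 0 < c * k by lra.
have ac : a * c = 2 / k by rewrite ha; field; lra.
have hk2 : 2 / k <= 1.
  have -> : 2 / k = 1 - (k - 2) / k by field; lra.
  have : 0 <= (k - 2) / k by apply: Rle_mult_inv_pos; lra.
  lra.
have ha1 : a <= 1.
  rewrite ha.
  have -> : 2 / (c * k) = 1 - (c * k - 2) / (c * k) by field; lra.
  have : 0 <= (c * k - 2) / (c * k) by apply: Rle_mult_inv_pos; lra.
  lra.
rewrite Rabs_left1; last lra.
rewrite ac.
have step : (1 - 2 / k) * D <= (1 - 2 / k) * (2 * C) by apply: Rmult_le_compat_l; lra.
apply: Rle_trans (_ : (1 - 2 / k) * (2 * C) + - (a - 1) * (2 * C) <= _); first lra.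
have e : 2 * C * J / (c * k) - ((1 - 2 / k) * (2 * C) + - (a - 1) * (2 * C))
   = (2 * C) * ((J - 2 * (c * k) + 2 * c + 2) / (c * k)) by rewrite ha; field; lra.
have hckJ : c * k <= c * J + c.
  have : c * k <= c * (J + 1) by apply: Rmult_le_compat_l; lra.
  lra.
have : 0 <= (2 * C) * ((J - 2 * (c * k) + 2 * c + 2) / (c * k)).
  apply: Rmult_le_pos; first lra.
  apply: Rle_mult_inv_pos; lra.
lra.
Qed.

Lemma alg2 (c C J k D a a' : R) : 0 < c -> 0 <= C -> 2 <= J -> 2 <= k ->
  a = 2 / (c * (k + 1)) -> a' = 2 / (c * k) -> 0 <= D -> D <= 2 * C * J / (c * k) ->
  (1 - a * c) * D + Rabs (a - a') * (2 * C) <= 2 * C * J / (c * (k + 1)).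
Proof.
move=> hc hC hJ hk ha ha' hD0 hD.
have ac : a * c = 2 / (k + 1) by rewrite ha; field; lra.
have hk2 : 0 <= 1 - 2 / (k + 1).
  have -> : 1 - 2 / (k + 1) = (k - 1) / (k + 1) by field; lra.
  apply: Rle_mult_inv_pos; lra.
have hck : 0 < c * k by apply: Rmult_lt_0_compat; lra.
have eaa : a' - a = 2 / (c * k * (k + 1)) by rewrite ha ha'; field; lra.
have haa : 0 <= a' - a.
  rewrite eaa; apply: Rle_mult_inv_pos; first lra.
  apply: Rmult_lt_0_compat; lra.
rewrite Rabs_left1; last lra.
rewrite ac.
have step : (1 - 2 / (k + 1)) * D <= (1 - 2 / (k + 1)) * (2 * C * J / (c * k))
  by apply: Rmult_le_compat_l; lra.
apply: Rle_trans (_ : (1 - 2 / (k + 1)) * (2 * C * J / (c * k)) + (a' - a) * (2 * C) <= _); first lra.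
have e : 2 * C * J / (c * (k + 1)) - ((1 - 2 / (k + 1)) * (2 * C * J / (c * k)) + (a' - a) * (2 * C))
   = (2 * C) * ((J - 2) / (c * k * (k + 1))) by rewrite eaa; field; lra.
have : 0 <= (2 * C) * ((J - 2) / (c * k * (k + 1))).
  apply: Rmult_le_pos; first lra.
  apply: Rle_mult_inv_pos; first lra.
  apply: Rmult_lt_0_compat; lra.
lra.
Qed.

Section Main.
Variables (n : nat) (beta : R) (S T : vec n -> vec n) (x0 xt : vec n).
Hypotheses (hb0 : 0 <= beta) (hb1 : beta < 1) (hS : is_contraction beta S)
  (hT : nonexpansive T) (hxt : Fix T xt).

Local Notation X := (iter_x beta S T x0).
Local Notation C := (Cconst beta S x0 xt).
Local Notation d x y := (vnorm (vsub x y)).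

Lemma iter_S k : X k.+1 =
  vcomb (alpha beta k.+1) (S (X k)) (1 - alpha beta k.+1) (T (X k)).
Proof. by []. Qed.

Lemma C_ge0 : 0 <= C.
Proof. apply: Rle_trans (Rmax_l _ _); exact: vnorm_ge0. Qed.

Lemma C_Sxt : d xt (S xt) <= (1 - beta) * C.
Proof.
have h := Rmax_r (d x0 xt) (/ (1 - beta) * d xt (S xt)).
have hc : 0 < 1 - beta by lra.
rewrite {1}(_ : d xt (S xt) = (1 - beta) * (/ (1 - beta) * d xt (S xt))); last by field; lra.
apply: Rmult_le_compat_l; [lra | exact: h].
Qed.

Lemma ball k : d (X k) xt <= C.
Proof.
elim: k => [|k IH]; first exact: Rmax_l.
rewrite iter_S.
have [[ha0 ha1] _] := @alpha_bounds beta k.+1 hb0 hb1 (erefl true).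
set a := alpha beta k.+1 in ha0 ha1 *.
rewrite (@vnorm_ext n _ (fun i => a * vsub (S (X k)) xt i + (1 - a) * vsub (T (X k)) xt i));
  last by move=> i; rewrite /vsub /vcomb; ring.
apply: Rle_trans (vnorm_comb2 _ _ _ _ _) _.
rewrite (Rabs_pos_eq a); last exact: ha0.
rewrite (Rabs_pos_eq (1 - a)); last lra.
have h1 : d (S (X k)) xt <= C.
  apply: Rle_trans (vdist_tri _ _ (S xt) _) _.
  have := hS (X k) xt; have := C_Sxt; rewrite vdist_sym.
  have := C_ge0.
  move=> hC h2 h3.
  have : beta * d (X k) xt <= beta * C by apply: Rmult_le_compat_l.
  lra.
have h2 : d (T (X k)) xt <= C.
  have := hT (X k) xt; rewrite hxt; lra.
have : a * d (S (X k)) xt <= a * C by apply: Rmult_le_compat_l.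
have : (1 - a) * d (T (X k)) xt <= (1 - a) * C by apply: Rmult_le_compat_l; lra.
lra.
Qed.

Lemma ST_bound k : d (S (X k)) (T (X k)) <= 2 * C.
Proof.
apply: Rle_trans (vdist_tri _ _ xt _) _.
rewrite (vdist_sym _ xt).
have h1 : d (S (X k)) xt <= C.
  apply: Rle_trans (vdist_tri _ _ (S xt) _) _.
  have := hS (X k) xt; have := C_Sxt; rewrite vdist_sym.
  have := C_ge0; have := ball k.
  move=> hb hC h2 h3.
  have : beta * d (X k) xt <= beta * C by apply: Rmult_le_compat_l.
  lra.
have h2 : d (T (X k)) xt <= C.
  have := hT (X k) xt; rewrite hxt; have := ball k; lra.
lra.
Qed.

Lemma step_bound k : d (X k.+1) (X k) <= 2 * C.
Proof.
apply: Rle_trans (vdist_tri _ _ xt _) _.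
rewrite (vdist_sym _ xt); have := ball k; have := ball k.+1; lra.
Qed.

Lemma rec_bound m :
  d (X m.+2) (X m.+1) <= (1 - alpha beta m.+2 * (1 - beta)) * d (X m.+1) (X m)
     + Rabs (alpha beta m.+2 - alpha beta m.+1) * (2 * C).
Proof.
have [[ha0 ha1] _] := @alpha_bounds beta m.+2 hb0 hb1 (erefl true).
have Hp : forall i, X m.+1 i = alpha beta m.+1 * S (X m) i + (1 - alpha beta m.+1) * T (X m) i
  by [].
rewrite {1}iter_S.
set p := X m.+1. set q := X m.
set a := alpha beta m.+2 in ha0 ha1 *. set a' := alpha beta m.+1.
rewrite (@vnorm_ext n _ (fun i => a * vsub (S p) (S q) i + (1 - a) * vsub (T p) (T q) i
   + (a - a') * vsub (S q) (T q) i));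
  last by move=> i; rewrite /vsub /vcomb {3}/p (Hp i) -/a' -/q; ring.
apply: Rle_trans (vnorm_comb3 _ _ _ _ _ _ _) _.
rewrite (Rabs_pos_eq a); last exact: ha0.
rewrite (Rabs_pos_eq (1 - a)); last lra.
have h1 := hS p q. have h2 := hT p q. have h3 := ST_bound m.
have h4 : 0 <= Rabs (a - a') by apply: Rabs_pos.
have : a * d (S p) (S q) <= a * (beta * d p q) by apply: Rmult_le_compat_l.
have : (1 - a) * d (T p) (T q) <= (1 - a) * (1 * d p q) by apply: Rmult_le_compat_l; lra.
have : Rabs (a - a') * d (S q) (T q) <= Rabs (a - a') * (2 * C) by apply: Rmult_le_compat_l.
have e : (1 - a * (1 - beta)) * d p q = a * (beta * d p q) + (1 - a) * (1 * d p q) by ring.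
lra.
Qed.


Local Notation J := (Jconst beta).

Lemma main_bound m : d (X m.+1) (X m) <= 2 * C * J / ((1 - beta) * INR m.+1).
Proof.
have [hcJ [hcJ1 [hJ2 [z hz]]]] := J_spec beta hb0 hb1.
have hc : 0 < 1 - beta by lra.
have hC := C_ge0.
elim: m => [|m IH].
  apply: Rle_trans (step_bound 0) _.
  rewrite (_ : INR 1 = 1) //.
  have e : 2 * C * J / ((1 - beta) * 1) - 2 * C = 2 * C * ((J - (1 - beta)) / (1 - beta))
    by field; repeat split; lra.
  have : 0 <= 2 * C * ((J - (1 - beta)) / (1 - beta)).
    apply: Rmult_le_pos; first lra.
    apply: Rle_mult_inv_pos; lra.
  lra.
have hk0 : 0 <= INR m.+1 := pos_INR _.
case: (int_dich _ _ m.+2 hz) => hk.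
  apply: Rle_trans (step_bound m.+1) _.
  have hK : 0 < INR m.+2 by apply: lt_0_INR; apply/ltP.
  have hpos : 0 < (1 - beta) * INR m.+2.
    apply: Rmult_lt_0_compat; first lra.
    by apply: lt_0_INR; apply/ltP.
  have hck : (1 - beta) * INR m.+2 <= J.
    have : (1 - beta) * INR m.+2 <= 1 * INR m.+2.
      apply: Rmult_le_compat_r; [exact: pos_INR | lra].
    lra.
  have e : 2 * C * J / ((1 - beta) * INR m.+2) - 2 * C
       = 2 * C * ((J - (1 - beta) * INR m.+2) / ((1 - beta) * INR m.+2)) by field; repeat split; lra.
  have : 0 <= 2 * C * ((J - (1 - beta) * INR m.+2) / ((1 - beta) * INR m.+2)).
    apply: Rmult_le_pos; first lra.
    apply: Rle_mult_inv_pos; lra.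
  lra.
case: m IH hk0 hk => [|m'] IH hk0 hk.
  rewrite (_ : INR 2 = 2) in hk; last by rewrite /=; ring.
  lra.
have hS2 : INR m'.+3 = INR m'.+2 + 1 by rewrite S_INR.
have hck2 : 2 < (1 - beta) * INR m'.+3.
  have : (1 - beta) * (J + 1) <= (1 - beta) * INR m'.+3 by apply: Rmult_le_compat_l; lra.
  lra.
have ha := @alpha_form beta m'.+3 hb0 hb1 (erefl true) hck2.
apply: Rle_trans (rec_bound m'.+1) _.
have hD0 := vnorm_ge0 _ (vsub (X m'.+2) (X m'.+1)).
case: (int_dich _ _ m'.+2 hz) => hk'.
  have ha' : alpha beta m'.+2 = 1.
    apply: alpha_one => //.
    have : (1 - beta) * INR m'.+2 <= (1 - beta) * J by apply: Rmult_le_compat_l; lra.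
    lra.
  rewrite ha'.
  apply: (@alg1 (1 - beta) C J (INR m'.+3) _ _) => //; try lra.
  exact: step_bound.
have hck1 : 2 < (1 - beta) * INR m'.+2.
  have : (1 - beta) * (J + 1) <= (1 - beta) * INR m'.+2 by apply: Rmult_le_compat_l; lra.
  lra.
have ha' := @alpha_form beta m'.+2 hb0 hb1 (erefl true) hck1.
rewrite hS2; rewrite hS2 in ha.
apply: (@alg2 (1 - beta) C J (INR m'.+2) _ _ _) => //; lra.
Qed.

Lemma res_bound m : d (T (X m)) (X m) <= 2 * C * (J + 2) / ((1 - beta) * INR m.+1).
Proof.
have hc : 0 < 1 - beta by lra.
have hC := C_ge0.
have hK : 0 < INR m.+1 by apply: lt_0_INR; apply/ltP.
have hpos : 0 < (1 - beta) * INR m.+1.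
  apply: Rmult_lt_0_compat; first lra.
  by apply: lt_0_INR; apply/ltP.
apply: Rle_trans (vdist_tri _ _ (X m.+1) _) _.
have hm := main_bound m.
have [[ha0 ha1] ha2] := @alpha_bounds beta m.+1 hb0 hb1 (erefl true).
rewrite vdist_sym.
rewrite (@vnorm_ext n _ (fun i => alpha beta m.+1 * vsub (S (X m)) (T (X m)) i));
  last by move=> i; rewrite iter_S /vsub /vcomb; ring.
rewrite vnorm_scale Rabs_pos_eq; last exact: ha0.
have hST := ST_bound m.
have : alpha beta m.+1 * d (S (X m)) (T (X m)) <= (2 / ((1 - beta) * INR m.+1)) * (2 * C).
  apply: Rmult_le_compat; [exact: ha0| exact: vnorm_ge0| |exact: hST].
  by rewrite Rmult_comm.
have e : 2 * C * (J + 2) / ((1 - beta) * INR m.+1) =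
   2 * C * J / ((1 - beta) * INR m.+1) + (2 / ((1 - beta) * INR m.+1)) * (2 * C)
   by field; repeat split; lra.
lra.
Qed.

End Main.

Lemma cv0 (f : nat -> R) (K c : R) : 0 < c ->
  (forall m, 0 <= f m <= K / (c * INR m.+1)) -> Un_cv f 0.
Proof.
move=> hc H eps heps.
set M := (Rabs K + 1) / c.
have hM : 0 < M by apply: Rmult_lt_0_compat; [have := Rabs_pos K; lra | exact: Rinv_0_lt_compat].
have [N [hN hN0]] := archimed_cor1 (eps / M) (Rmult_lt_0_compat _ _ heps (Rinv_0_lt_compat _ hM)).
exists N => m hm.
rewrite /R_dist Rminus_0_r.
have [h0 h1] := H m.
rewrite Rabs_pos_eq //.
have hK : 0 < INR m.+1 by apply: lt_0_INR; lia.
have hNp : 0 < INR N by apply: lt_0_INR.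
have hNm : INR N <= INR m.+1 by apply: le_INR; lia.
have e1 : K / (c * INR m.+1) <= M * / INR m.+1.
  rewrite /M.
  have -> : (Rabs K + 1) / c * / INR m.+1 = (Rabs K + 1) / (c * INR m.+1) by field; split; lra.
  apply: Rmult_le_compat_r.
    apply: Rlt_le; apply: Rinv_0_lt_compat; apply: Rmult_lt_0_compat; lra.
  have := Rle_abs K; lra.
have e2 : / INR m.+1 <= / INR N by apply: Rinv_le_contravar.
have e3 : M * / INR m.+1 <= M * / INR N by apply: Rmult_le_compat_l; lra.
have e4 : M * / INR N < M * (eps / M) by apply: Rmult_lt_compat_l.
have e5 : M * (eps / M) = eps by field; lra.
lra.
Qed.

Theorem lemma4p3 (n : nat) (beta : R) (S T : vec n -> vec n) (x0 : vec n)
  (hbeta0 : 0 <= beta) (hbeta1 : beta < 1)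
  (hS : is_contraction beta S) (hT : nonexpansive T)
  (hfix : exists x, Fix T x) :
  forall xt : vec n, Fix T xt ->
    (forall k : nat, (1 <= k)%nat ->
       vnorm (vsub (iter_x beta S T x0 k) (iter_x beta S T x0 (k - 1)))
         <= 2 * Cconst beta S x0 xt * Jconst beta / ((1 - beta) * INR k)
       /\
       vnorm (vsub (T (iter_x beta S T x0 (k - 1))) (iter_x beta S T x0 (k - 1)))
         <= 2 * Cconst beta S x0 xt * (Jconst beta + 2) / ((1 - beta) * INR k))
    /\ Un_cv (fun k => vnorm (vsub (iter_x beta S T x0 (Datatypes.S k))
                                    (iter_x beta S T x0 k))) 0
    /\ Un_cv (fun k => vnorm (vsub (T (iter_x beta S T x0 k))
                                    (iter_x beta S T x0 k))) 0.
Proof.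
move=> xt hxt.
have hc : 0 < 1 - beta by lra.
split.
  case=> [|m] // _.
  rewrite subn1 /=.
  split; [exact: main_bound | exact: res_bound].
split.
  apply: (@cv0 _ (2 * Cconst beta S x0 xt * Jconst beta) (1 - beta) hc) => m.
  split; [exact: vnorm_ge0 | exact: main_bound].
apply: (@cv0 _ (2 * Cconst beta S x0 xt * (Jconst beta + 2)) (1 - beta) hc) => m.
split; [exact: vnorm_ge0 | exact: res_bound].
Qed.
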